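(* Let $n\in\mathbb{N}$, let $G=\mathbb{Z}_3^n$ be the elementary abelian $3$-group of rank $n$ (written multiplicatively), let $S$ be a sum-free set in $G$, and let $x\in S$. Then: (i) any two of the sets $S$, $x^{-1}S$, $xS$ are disjoint; (ii) any two of the sets $S$, $SS^{-1}$, $S^{-1}$ are disjoint. Moreover, if $S$ is a maximal sum-free set in $G$, then: (iii) $S\cup x^{-1}S\cup xS=G$ and $|S|=\frac{|G|}{3}$; (iv) $S\cup SS^{-1}\cup S^{-1}=G$.
   Context: A non-empty subset $S$ of a group $G$ is called sum-free if for all $s_1,s_2\in S$ (including the case $s_1=s_2$) one has $s_1s_2\notin S$. A maximal sum-free set in a finite group $G$ means a sum-free set of largest possible cardinality among all sum-free sets in $G$. Notation: $xS=\{xs: s\in S\}$, $x^{-1}S=\{x^{-1}s : s\in S\}$, $S^{-1}=\{s^{-1}: s\in S\}$, $SS^{-1}=\{st^{-1}: s,t\in S\}$. *)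

(* Defs.v *)
From mathcomp Require Import all_boot all_fingroup all_solvable.
Set Implicit Arguments. Unset Strict Implicit. Unset Printing Implicit Defensive.
Local Open Scope group_scope.

Definition sum_free (gT : finGroupType) (G S : {set gT}) : Prop :=
  [/\ S != set0, S \subset G &
      forall s1 s2, s1 \in S -> s2 \in S -> s1 * s2 \notin S].

Definition max_sum_free (gT : finGroupType) (G S : {set gT}) : Prop :=
  sum_free G S /\ forall T : {set gT}, sum_free G T -> #|T| <= #|S|.

(* Main.v *)
Require Import Defs.
From mathcomp Require Import all_boot all_fingroup all_solvable.
Local Open Scope group_scope.

Lemma union3 (T : finType) (G A B C : {set T}) :
  A \subset G -> B \subset G -> C \subset G ->
  [disjoint A & B] -> [disjoint A & C] -> [disjoint B & C] ->
  (#|G| <= #|A| + #|B| + #|C|)%N ->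
  A :|: B :|: C = G /\ (#|A| + #|B| + #|C| = #|G|)%N.
Proof.
move=> sA sB sC dAB dAC dBC le.
have e : #|A :|: B :|: C| = (#|A| + #|B| + #|C|)%N.
  rewrite cardsU cardsU (disjoint_setI0 dAB) cards0 subn0.
  have -> : (A :|: B) :&: C = set0.
    by rewrite setIUl (disjoint_setI0 dAC) (disjoint_setI0 dBC) setU0.
  by rewrite cards0 subn0.
have sU : A :|: B :|: C \subset G by rewrite !subUset sA sB sC.
have leU := subset_leq_card sU.
have eq : #|A :|: B :|: C| = #|G| by apply/eqP; rewrite eqn_leq leU e le.
split; last by rewrite -e.
by apply/eqP; rewrite eqEcard sU eq leqnn.
Qed.

Lemma m3 (m : nat) : (m * 3 = m + m + m)%N.
Proof. by rewrite !mulnS muln0 addn0 addnA. Qed.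

Theorem lemma1 (n : nat) (gT : finGroupType) (G : {group gT}) (S : {set gT}) (x : gT) :
  3.-abelem G -> #|G| = (3 ^ n)%N ->
  sum_free G S -> x \in S ->
  [/\ (* (i) *)
      [/\ [disjoint S & x^-1 *: S], [disjoint S & x *: S]
        & [disjoint x^-1 *: S & x *: S]],
      (* (ii) *)
      [/\ [disjoint S & S * S^-1], [disjoint S & S^-1]
        & [disjoint S * S^-1 & S^-1]]
    & max_sum_free G S ->
      [/\ (* (iii) *) S :|: x^-1 *: S :|: x *: S = G,
          #|S| = (#|G| %/ 3)%N
        & (* (iv) *) S :|: S * S^-1 :|: S^-1 = G]].
Proof.
move=> abG _ [S0 sSG hsf] xS.
have [_ ex3] := abelemP (isT : prime 3) abG.
have sq : forall g, g \in G -> g * g = g^-1.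
  move=> g gG; apply: (mulgI g); rewrite mulgV.
  by rewrite -(ex3 g gG) !expgS expg0 mulg1.
have xG : x \in G by apply: (subsetP sSG).
have dis : forall A B : {set gT}, (forall z, z \in A -> z \in B -> False) ->
    [disjoint A & B].
  move=> A B h; rewrite -setI_eq0; apply/eqP/setP => z; rewrite !inE.
  by apply/negbTE/negP => /andP [] /h h1 /h1.
have i1 : [disjoint S & x^-1 *: S].
  apply: dis => z zS; rewrite mem_lcoset invgK => xz.
  by move: (hsf _ _ xS zS); rewrite xz.
have i2 : [disjoint S & x *: S].
  apply: dis => z zS; rewrite mem_lcoset => xz.
  by move: (hsf _ _ xS xz); rewrite mulKVg zS.
have i3 : [disjoint x^-1 *: S & x *: S].
  apply: dis => z; rewrite !mem_lcoset invgK => h1 h2.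
  move: (hsf _ _ xS h1); rewrite mulgA sq // h2.
  by [].
have ii1 : [disjoint S & S * S^-1].
  apply: dis => z zS /mulsgP [a b aS]; rewrite mem_invg => bS zE; subst z.
  by move: (hsf _ _ zS bS); rewrite mulgK aS.
have ii2 : [disjoint S & S^-1].
  apply: dis => z zS; rewrite mem_invg => ziS.
  by move: (hsf _ _ zS zS); rewrite sq ?ziS // (subsetP sSG).
have ii3 : [disjoint S * S^-1 & S^-1].
  apply: dis => z /mulsgP [a b aS]; rewrite mem_invg => bS zE; subst z.
  rewrite mem_invg invMg => h.
  by move: (hsf _ _ h aS); rewrite -mulgA mulVg mulg1 bS.
split=> // -[_ hmax].
(* a sum-free set of size |G|/3 *)
have xn1 : x != 1.
  by apply/eqP => x1; move: (hsf _ _ xS xS); rewrite x1 mulg1 -x1 xS.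
have G1 : (1%G : {group gT}) \in [pred H : {group gT} | H \proper G].
  rewrite inE proper1G; apply/eqP => G1; move: xG; rewrite G1 inE.
  by rewrite (negbTE xn1).
have [M maxM _] := maxgroup_exists G1.
have maxM' : maximal M G by [].
have iM := p_maximal_index (abelem_pgroup abG) maxM'.
have sMG : M \subset G by case/maxgroupP: maxM => /andP [].
have lag := Lagrange sMG; rewrite iM in lag.
have pMG : M \proper G by case/maxgroupP: maxM.
have [y yG yM] : exists2 y, y \in G & y \notin M.
  by case/properP: pMG => _ [y yG yM]; exists y.
have sfT : sum_free G (y *: M).
  split.
  - by apply/set0Pn; exists y; rewrite mem_lcoset mulVg group1.
  - apply/subsetP => z; rewrite mem_lcoset => h.
    by rewrite -(mulKVg y z) groupM // (subsetP sMG).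
  - move=> s1 s2; rewrite !mem_lcoset => h1 h2.
    apply/negP.
    have -> : y^-1 * (s1 * s2) = (y^-1 * s1) * y * (y^-1 * s2).
      by rewrite -!mulgA mulKVg.
    by rewrite groupMr // groupMl // (negbTE yM).
have leT := hmax _ sfT; rewrite card_lcoset in leT.
have subl : forall g, g \in G -> g *: S \subset G.
  move=> g gG; apply/subsetP => z; rewrite mem_lcoset => h.
  by rewrite -(mulKVg g z) groupM // (subsetP sSG).
have [u3 c3] : S :|: x^-1 *: S :|: x *: S = G /\
    (#|S| + #|x^-1 *: S| + #|x *: S| = #|G|)%N.
  apply: union3 => //; rewrite ?subl ?groupV //.
  by rewrite !card_lcoset -lag m3 !leq_add.
rewrite !card_lcoset in c3.
have eS : #|S| = #|M|.
  by apply/eqP; rewrite eqn_leq leT andbT -(leq_pmul2r (isT : (0 < 3)%N)) lag -c3 m3.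
split=> //.
  by rewrite -lag eS mulnK.
have sSS : S * S^-1 \subset G.
  apply/subsetP => z /mulsgP [a b aS]; rewrite mem_invg => bS zE; subst z.
  by apply: groupM; [exact: (subsetP sSG) | rewrite -groupV; exact: (subsetP sSG)].
have sSi : S^-1 \subset G.
  by apply/subsetP => z; rewrite mem_invg => h; rewrite -(invgK z) groupV (subsetP sSG).
have leSS : #|S| <= #|S * S^-1|.
  rewrite -(card_rcoset S x^-1); apply: subset_leq_card.
  apply/subsetP => z; rewrite mem_rcoset invgK => h; rewrite -(mulgK x z).
  by apply: mem_mulg => //; rewrite mem_invg invgK.
have le4 : (#|G| <= #|S| + #|(S * S^-1)%g| + #|S^-1|)%N.
  by rewrite card_invg -c3 leq_add2r leq_add2l.
by have [u4 _] := @union3 gT G S (S * S^-1) (S^-1) sSG sSS sSi ii1 ii2 ii3 le4.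
Qed.
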